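(* Let $k\geq 1$ and let $a,b,\alpha,\beta$ be positive real numbers with $a\geq b$. Define \[ \theta(t)=\frac{(\alpha+\beta t)^{a-b}\, e^{t\left(\frac{ka\beta\gamma-b\beta\gamma}{k}\right)}\,\Gamma(\alpha+\beta t)^a}{k^{-\frac{b\beta t}{k}}\,\Gamma_k(\alpha+\beta t)^b},\qquad t\in(0,\infty). \] Then $\theta$ is increasing on $(0,\infty)$, and for every $t\in(0,1)$, \[ \frac{\alpha^{a-b}e^{-t\left(\frac{ka\beta\gamma-b\beta\gamma}{k}\right)}\,\Gamma(\alpha)^a}{(\alpha+\beta t)^{a-b}\,k^{\frac{b\beta t}{k}}\,\Gamma_k(\alpha)^b} \leq\frac{\Gamma(\alpha+\beta t)^a}{\Gamma_k(\alpha+\beta t)^b} \leq\frac{(\alpha+\beta)^{a-b}e^{(1-t)\left(\frac{ka\beta\gamma-b\beta\gamma}{k}\right)}\,\Gamma(\alpha+\beta)^a}{(\alpha+\beta t)^{a-b}\,k^{\frac{b\beta}{k}(t-1)}\,\Gamma_k(\alpha+\beta)^b}. \]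
   Context: $\Gamma$ is Euler's Gamma function and $\gamma$ is the Euler–Mascheroni constant. For $k>0$ and $t>0$, the $k$-Gamma function is $\Gamma_k(t)=\int_0^\infty e^{-x^k/k}x^{t-1}\,dx$. *)

(* Defs.v *)
From Stdlib Require Import Reals.
From Coquelicot Require Import Coquelicot.
Open Scope R_scope.

Definition Gamma (t : R) : R :=
  RInt_gen (fun x => exp (- x) * Rpower x (t - 1)) (at_right 0) (Rbar_locally p_infty).

Definition Gamma_k (k t : R) : R :=
  RInt_gen (fun x => exp (- (Rpower x k / k)) * Rpower x (t - 1))
    (at_right 0) (Rbar_locally p_infty).

Definition euler_gamma : R :=
  real (Lim_seq (fun n => sum_f_R0 (fun j => / INR (S j)) n - ln (INR (S n)))).

Definition theta (k a b alpha beta t : R) : R :=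
  Rpower (alpha + beta * t) (a - b)
  * exp (t * ((k * a * beta * euler_gamma - b * beta * euler_gamma) / k))
  * Rpower (Gamma (alpha + beta * t)) a
  / (Rpower k (- (b * beta * t / k)) * Rpower (Gamma_k k (alpha + beta * t)) b).

(* Main.v *)
Require Import Defs.
From Stdlib Require Import Reals Lra Lia Classical.
From Coquelicot Require Import Coquelicot.
Open Scope R_scope.

Notation ZF := (at_right 0).
Notation IF := (Rbar_locally p_infty).
Definition GI (f : R -> R) (l : R) := is_RInt_gen f ZF IF l.

Lemma ev_pos : filter_prod ZF IF (fun ab : R * R => 0 < fst ab < 1 /\ 1 < snd ab).
Proof.
  apply Filter_prod with (fun a => 0 < a < 1) (fun b => 1 < b).
  - exists (mkposreal 1 Rlt_0_1). intros y Hy Hp. split; auto.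
    unfold ball in Hy; simpl in Hy; unfold AbsRing_ball, abs, minus, plus, opp in Hy; simpl in Hy.
    apply Rabs_lt_between in Hy. lra.
  - exists 1. auto.
  - intros x y Hx Hy. simpl. auto.
Qed.

Lemma GI_of_lim f l :
  (forall a b, 0 < a -> a <= b -> ex_RInt f a b) ->
  filterlim (fun ab : R * R => RInt f (fst ab) (snd ab)) (filter_prod ZF IF) (locally l) ->
  GI f l.
Proof.
  intros Hex Hlim P HP.
  unfold filtermapi.
  specialize (Hlim P HP). unfold filtermap in Hlim.
  generalize (filter_and _ _ Hlim ev_pos). apply filter_imp.
  intros [a b] [H1 [H2 H3]]. simpl in *.
  exists (@RInt R_CompleteNormedModule f a b). split; auto. apply (RInt_correct (V:=R_CompleteNormedModule)). apply Hex; lra.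
Qed.

Lemma lim_of_GI f l : GI f l ->
  filter_prod ZF IF (fun ab : R * R => ex_RInt f (fst ab) (snd ab)) /\
  filterlim (fun ab : R * R => RInt f (fst ab) (snd ab)) (filter_prod ZF IF) (locally l).
Proof.
  intros H. split.
  - assert (H1 := H (fun _ => True) (filter_true)).
    unfold filtermapi in H1. revert H1. apply filter_imp.
    intros x [y [Hy _]]. exists y; auto.
  - intros P HP. specialize (H P HP). unfold filtermapi in H. unfold filtermap.
    revert H. apply filter_imp. intros x [y [Hy Py]].
    rewrite (is_RInt_unique _ _ _ _ Hy). auto.
Qed.

Lemma GI_unique f l : GI f l -> RInt_gen f (at_right 0) (Rbar_locally p_infty) = l.
Proof.
  intros H. apply is_RInt_gen_unique. exact H.
Qed.

Lemma GI_le f g l1 l2 : GI f l1 -> GI g l2 -> (forall x, 0 < x -> f x <= g x) -> l1 <= l2.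
Proof.
  intros Hf Hg Hle.
  destruct (lim_of_GI _ _ Hf) as [Ef Lf].
  destruct (lim_of_GI _ _ Hg) as [Eg Lg].
  assert (H := filterlim_le (F := filter_prod ZF IF)
     (fun ab : R * R => RInt f (fst ab) (snd ab)) (fun ab : R * R => RInt g (fst ab) (snd ab)) l1 l2).
  simpl in H. apply H; auto.
  generalize (filter_and _ _ (filter_and _ _ Ef Eg) ev_pos). apply filter_imp.
  intros [a b] [[E1 E2] [H1 H2]]. simpl in *.
  apply RInt_le; auto; try lra. intros; apply Hle; lra.
Qed.

Lemma GI_ge_proper f l c d : GI f l -> 0 < c -> c <= d ->
  (forall x, 0 < x -> 0 <= f x) -> RInt f c d <= l.
Proof.
  intros Hf Hc Hcd Hpos.
  destruct (lim_of_GI _ _ Hf) as [Ef Lf].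
  assert (H := filterlim_le (F := filter_prod ZF IF)
     (fun _ : R * R => RInt f c d) (fun ab : R * R => RInt f (fst ab) (snd ab)) (RInt f c d) l).
  simpl in H. apply H; auto.
  2: apply filterlim_const.
  assert (Hx : filter_prod ZF IF (fun ab : R * R => fst ab < c /\ d < snd ab)).
  { apply Filter_prod with (fun a => a < c) (fun b => d < b).
    - exists (mkposreal c Hc). intros y Hy _.
      unfold ball in Hy; simpl in Hy; unfold AbsRing_ball, abs, minus, plus, opp in Hy; simpl in Hy.
      apply Rabs_lt_between in Hy. lra.
    - exists d. auto.
    - intros; simpl; auto. }
  generalize (filter_and _ _ (filter_and _ _ Ef Hx) ev_pos). apply filter_imp.
  intros [a b] [[E1 [H1 H2]] [H3 H4]]. simpl in *.
  assert (Eac : ex_RInt f a c). { apply (ex_RInt_Chasles_1 (V:=R_CompleteNormedModule)) with b; auto. lra. }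
  assert (Ecb : ex_RInt f c b). { apply (ex_RInt_Chasles_2 (V:=R_CompleteNormedModule)) with a; auto. lra. }
  assert (Ecd : ex_RInt f c d). { apply (ex_RInt_Chasles_1 (V:=R_CompleteNormedModule)) with b; auto. lra. }
  assert (Edb : ex_RInt f d b). { apply (ex_RInt_Chasles_2 (V:=R_CompleteNormedModule)) with c; auto. lra. }
  rewrite <- (RInt_Chasles f a c b); auto.
  rewrite <- (RInt_Chasles f c d b); auto.
  assert (0 <= RInt f a c). { apply RInt_ge_0; auto; try lra. intros; apply Hpos; lra. }
  assert (0 <= RInt f d b). { apply RInt_ge_0; auto; try lra. intros; apply Hpos; lra. }
  unfold plus; simpl. lra.
Qed.

Lemma exR_pos (f : R -> R) a b : (forall x, 0 < x -> continuous f x) -> 0 < a -> a <= b -> ex_RInt f a b.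
Proof.
  intros Hc Ha Hab. apply (ex_RInt_continuous (V:=R_CompleteNormedModule)).
  intros z Hz. apply Hc. rewrite Rmin_left in Hz; lra.
Qed.

Lemma GI_exists (f : R -> R) C : (forall x, 0 < x -> continuous f x) -> (forall x, 0 < x -> 0 <= f x) ->
  (forall a b, 0 < a -> a <= b -> RInt f a b <= C) -> exists l, GI f l.
Proof.
  intros Hc Hp HC.
  set (E := fun r => exists a b, 0 < a <= b /\ r = RInt f a b).
  assert (Hb : bound E). { exists C. intros r [a [b [Hab ->]]]. apply HC; lra. }
  assert (Hne : exists x, E x). { exists (RInt f 1 1). exists 1, 1. split; auto; lra. }
  destruct (completeness E Hb Hne) as [S [HS1 HS2]].
  exists S. apply GI_of_lim.
  { intros; apply exR_pos; auto. }
  apply filterlim_locally. intros eps.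
  assert (Hex : exists a0 b0, 0 < a0 <= b0 /\ S - eps < RInt f a0 b0).
  { apply NNPP. intros Hn.
    assert (S <= S - eps). { apply HS2. intros r [a [b [Hab ->]]].
      apply Rnot_lt_le. intros Hl. apply Hn. exists a, b. auto. }
    destruct eps; simpl in *; lra. }
  destruct Hex as [a0 [b0 [Hab0 Hlt]]].
  apply Filter_prod with (fun a => 0 < a < a0) (fun b => b0 < b).
  - assert (Ha0 : 0 < a0) by lra. exists (mkposreal a0 Ha0). intros y Hy Hy0.
    unfold ball in Hy; simpl in Hy; unfold AbsRing_ball, abs, minus, plus, opp in Hy; simpl in Hy.
    apply Rabs_lt_between in Hy. lra.
  - exists b0. auto.
  - intros a b Ha Hb'. simpl.
    unfold ball; simpl; unfold AbsRing_ball, abs, minus, plus, opp; simpl.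
    assert (HE : RInt f a b <= S). { apply HS1. exists a, b. split; auto; lra. }
    assert (Ea : ex_RInt f a a0) by (apply exR_pos; auto; lra).
    assert (Em : ex_RInt f a0 b0) by (apply exR_pos; auto; lra).
    assert (Eb : ex_RInt f b0 b) by (apply exR_pos; auto; lra).
    assert (Eab : ex_RInt f a b0) by (apply exR_pos; auto; lra).
    rewrite <- (RInt_Chasles f a b0 b); auto.
    rewrite <- (RInt_Chasles f a a0 b0); auto.
    assert (0 <= RInt f a a0). { apply RInt_ge_0; auto; try lra. intros; apply Hp; lra. }
    assert (0 <= RInt f b0 b). { apply RInt_ge_0; auto; try lra. intros; apply Hp; lra. }
    rewrite <- (RInt_Chasles f a b0 b) in HE; auto.
    rewrite <- (RInt_Chasles f a a0 b0) in HE; auto.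
    unfold plus in *; simpl in *.
    apply Rabs_def1; destruct eps; simpl in *; lra.
Qed.

Definition gi (s x : R) := exp (- x) * Rpower x (s - 1).

Lemma gi_cont s x : 0 < x -> continuous (gi s) x.
Proof. intros Hx. apply (ex_derive_continuous (K:=R_AbsRing) (V:=R_NormedModule)). unfold gi, Rpower. auto_derive. auto. Qed.

Lemma gi_pos s x : 0 < gi s x.
Proof. unfold gi, Rpower. apply Rmult_lt_0_compat; apply exp_pos. Qed.

Lemma ln_le_lin y : 0 < y -> ln y <= y - 1.
Proof. intros Hy. generalize (exp_ineq1_le (ln y)). rewrite exp_ln; lra. Qed.

Lemma exp_le_exp_compat x y : x <= y -> exp x <= exp y.
Proof. intros [H|H]. left; apply exp_increasing; auto. subst; lra. Qed.

Lemma gi_tail s : exists K, 0 < K /\ forall x, 1 <= x -> gi s x <= K * exp (- x / 2).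
Proof.
  set (m := Rabs (s - 1) + 1).
  assert (Hm : 0 < m) by (unfold m; generalize (Rabs_pos (s-1)); lra).
  exists (exp (m * ln (2 * m))). split; [apply exp_pos|].
  intros x Hx. unfold gi, Rpower. rewrite <- !exp_plus.
  apply exp_le_exp_compat.
  assert (Hl : 0 <= ln x). { rewrite <- ln_1. apply ln_le; lra. }
  assert (H1 : (s - 1) * ln x <= m * ln x).
  { apply Rmult_le_compat_r; auto. unfold m. generalize (Rle_abs (s-1)). lra. }
  assert (H2 : ln (x / (2 * m)) <= x / (2 * m) - 1).
  { apply ln_le_lin. apply Rdiv_lt_0_compat; lra. }
  unfold Rdiv in H2. rewrite ln_mult in H2; try lra.
  2: { apply Rinv_0_lt_compat; lra. }
  rewrite ln_Rinv in H2 by lra.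
  assert (H3 : m * ln x <= m * ln (2*m) + x / 2).
  { assert (m * (ln x + - ln (2 * m)) <= m * (x * / (2 * m) - 1)).
    { apply Rmult_le_compat_l; lra. }
    replace (m * (x * / (2 * m) - 1)) with (x / 2 - m) in H by (field; lra).
    lra. }
  lra.
Qed.

Lemma exp_sub_ln y x : 0 < x -> exp ((y - 1) * ln x) = exp (y * ln x) / x.
Proof.
  intros Hx. replace ((y - 1) * ln x) with (y * ln x + - ln x) by ring.
  rewrite exp_plus, exp_Ropp, exp_ln; auto.
Qed.

Lemma der_pow s x : 0 < s -> 0 < x -> is_derive (fun x => Rpower x s / s) x (Rpower x (s - 1)).
Proof.
  intros Hs Hx. unfold Rpower. auto_derive. auto.
  rewrite exp_sub_ln; auto. field. split; lra.
Qed.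

Lemma cont_pow s x : 0 < x -> continuous (fun x => Rpower x s) x.
Proof. intros Hx. apply (ex_derive_continuous (K:=R_AbsRing) (V:=R_NormedModule)).
  unfold Rpower. auto_derive. auto. Qed.

Lemma int_head s a : 0 < s -> 0 < a <= 1 -> RInt (gi s) a 1 <= 1 / s.
Proof.
  intros Hs Ha.
  apply Rle_trans with (RInt (fun x => Rpower x (s - 1)) a 1).
  { apply RInt_le; try lra.
    - apply exR_pos; try lra. intros; apply gi_cont; auto.
    - apply exR_pos; try lra. intros; apply cont_pow; auto.
    - intros x Hx. unfold gi. rewrite <- (Rmult_1_l (Rpower x (s-1))) at 2.
      apply Rmult_le_compat_r. unfold Rpower; left; apply exp_pos.
      rewrite <- exp_0. apply exp_le_exp_compat. lra. }
  assert (Hd : is_RInt (V:=R_CompleteNormedModule) (fun x => Rpower x (s - 1)) a 1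
     (minus ((fun x => Rpower x s / s) 1) ((fun x => Rpower x s / s) a))).
  { apply (is_RInt_derive (V:=R_CompleteNormedModule) (fun x => Rpower x s / s)).
  - intros x Hx. rewrite Rmin_left in Hx by lra. apply der_pow; lra.
  - intros x Hx. rewrite Rmin_left in Hx by lra. apply cont_pow; lra. }
  rewrite (is_RInt_unique _ _ _ _ Hd).
  { unfold minus, plus, opp; simpl.
    unfold Rpower at 1. rewrite ln_1, Rmult_0_r, exp_0.
    assert (0 < Rpower a s / s). { apply Rdiv_lt_0_compat; auto. unfold Rpower; apply exp_pos. }
    lra. }
Qed.

Lemma der_exph K x : is_derive (fun x => - 2 * K * exp (- x / 2)) x (K * exp (- x / 2)).
Proof. auto_derive. auto. unfold Rdiv; field. Qed.

Lemma int_tail s K b : (forall x, 1 <= x -> gi s x <= K * exp (- x / 2)) -> 0 < K -> 1 <= b ->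
  RInt (gi s) 1 b <= 2 * K.
Proof.
  intros HK HK0 Hb.
  apply Rle_trans with (RInt (fun x => K * exp (- x / 2)) 1 b).
  { apply RInt_le; try lra.
    - apply exR_pos; try lra. intros; apply gi_cont; auto.
    - apply exR_pos; try lra. intros. apply (ex_derive_continuous (K:=R_AbsRing) (V:=R_NormedModule)).
      auto_derive; auto.
    - intros x Hx. apply HK. lra. }
  assert (Hd : is_RInt (V:=R_CompleteNormedModule) (fun x => K * exp (- x / 2)) 1 b
     (minus ((fun x => - 2 * K * exp (- x / 2)) b) ((fun x => - 2 * K * exp (- x / 2)) 1))).
  { apply (is_RInt_derive (V:=R_CompleteNormedModule) (fun x => - 2 * K * exp (- x / 2))).
  - intros x Hx. apply der_exph.
  - intros x Hx. apply (ex_derive_continuous (K:=R_AbsRing) (V:=R_NormedModule)).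
      auto_derive; auto. }
  rewrite (is_RInt_unique _ _ _ _ Hd).
  { unfold minus, plus, opp; simpl.
    assert (0 < exp (- b / 2)) by apply exp_pos.
    assert (exp (- (1) / 2) <= 1). { apply Rle_trans with (exp 0); [apply exp_le_exp_compat; lra | rewrite exp_0; lra]. }
    assert (0 <= K * (1 - exp (- (1) / 2))) by (apply Rmult_le_pos; lra).
    assert (0 <= K * exp (- b / 2)) by (apply Rmult_le_pos; lra).
    lra. }
Qed.

Lemma int_bound (f : R -> R) C1 C2 : (forall x, 0 < x -> continuous f x) -> (forall x, 0 < x -> 0 <= f x) ->
  (forall a, 0 < a <= 1 -> RInt f a 1 <= C1) -> (forall b, 1 <= b -> RInt f 1 b <= C2) ->
  forall a b, 0 < a -> a <= b -> RInt f a b <= C1 + C2.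
Proof.
  intros Hc Hp H1 H2 a b Ha Hab.
  set (a' := Rmin a 1). set (b' := Rmax b 1).
  assert (Ha' : 0 < a' <= a /\ a' <= 1) by (unfold a'; split; [split|]; [apply Rmin_glb_lt|apply Rmin_l|apply Rmin_r]; lra).
  assert (Hb' : b <= b' /\ 1 <= b') by (unfold b'; split; [apply Rmax_l|apply Rmax_r]).
  assert (E1 : ex_RInt f a' a) by (apply exR_pos; auto; lra).
  assert (E2 : ex_RInt f a b) by (apply exR_pos; auto; lra).
  assert (E3 : ex_RInt f b b') by (apply exR_pos; auto; lra).
  assert (E4 : ex_RInt f a' b) by (apply exR_pos; auto; lra).
  assert (E5 : ex_RInt f a' 1) by (apply exR_pos; auto; lra).
  assert (E6 : ex_RInt f 1 b') by (apply exR_pos; auto; lra).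
  assert (Hs : RInt f a' b' = RInt f a' a + RInt f a b + RInt f b b').
  { rewrite <- (RInt_Chasles f a' b b'); auto. rewrite <- (RInt_Chasles f a' a b); auto. }
  assert (Hs2 : RInt f a' b' = RInt f a' 1 + RInt f 1 b').
  { rewrite <- (RInt_Chasles f a' 1 b'); auto. }
  assert (0 <= RInt f a' a). { apply RInt_ge_0; auto; try lra. intros; apply Hp; lra. }
  assert (0 <= RInt f b b'). { apply RInt_ge_0; auto; try lra. intros; apply Hp; lra. }
  assert (RInt f a' 1 <= C1) by (apply H1; lra).
  assert (RInt f 1 b' <= C2) by (apply H2; lra).
  lra.
Qed.

Lemma gi_GI s : 0 < s -> exists l, GI (gi s) l.
Proof.
  intros Hs. destruct (gi_tail s) as [K [HK0 HK]].
  apply GI_exists with (1 / s + 2 * K).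
  - intros; apply gi_cont; auto.
  - intros; left; apply gi_pos.
  - apply int_bound.
    + intros; apply gi_cont; auto.
    + intros; left; apply gi_pos.
    + intros; apply int_head; auto.
    + intros; apply int_tail; auto.
Qed.

Lemma ball0 (eps : posreal) y : Rabs y < eps -> ball 0 eps y.
Proof. intros H. unfold ball; simpl; unfold AbsRing_ball, abs, minus, plus, opp; simpl.
  rewrite Ropp_0, Rplus_0_r. auto. Qed.
Lemma ball0' (eps : posreal) y v : Rabs (v - y) < eps -> ball y eps v.
Proof. intros H. unfold ball; simpl; unfold AbsRing_ball, abs, minus, plus, opp; simpl. auto. Qed.
Lemma ball_inv (x eps y : R) : ball x eps y -> Rabs (y - x) < eps.
Proof. unfold ball; simpl; unfold AbsRing_ball, abs, minus, plus, opp; simpl. auto. Qed.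

Lemma lim_right_pow (u : R -> R) s : 0 < s ->
  (forall x, 0 < x < 1 -> Rabs (u x) <= Rpower x s) -> filterlim u (at_right 0) (locally 0).
Proof.
  intros Hs Hu. apply filterlim_locally. intros eps.
  assert (Hd : 0 < Rmin 1 (Rpower eps (1 / s))).
  { apply Rmin_glb_lt; [lra| unfold Rpower; apply exp_pos]. }
  exists (mkposreal _ Hd). intros y Hy Hy0. simpl in Hy.
  apply ball_inv in Hy. rewrite Rminus_0_r, Rabs_pos_eq in Hy by lra.
  apply ball0.
  assert (y < 1) by (generalize (Rmin_l 1 (Rpower eps (1/s))); lra).
  assert (y < Rpower eps (1/s)) by (generalize (Rmin_r 1 (Rpower eps (1/s))); lra).
  eapply Rle_lt_trans. apply Hu; lra.
  replace (pos eps) with (Rpower (Rpower eps (1 / s)) s).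
  apply Rlt_Rpower_l; auto.
  rewrite Rpower_mult. replace (1 / s * s) with 1 by (field; lra).
  apply Rpower_1. destruct eps; auto.
Qed.

Lemma lim_inf_exp (u : R -> R) K : 0 < K ->
  (forall x, 1 <= x -> Rabs (u x) <= K * exp (- x / 2)) -> filterlim u (Rbar_locally p_infty) (locally 0).
Proof.
  intros HK Hu. apply filterlim_locally. intros eps.
  exists (Rmax 1 (2 * (ln K - ln eps))). intros x Hx.
  apply ball0.
  assert (1 < x) by (generalize (Rmax_l 1 (2 * (ln K - ln eps))); lra).
  assert (2 * (ln K - ln eps) < x) by (generalize (Rmax_r 1 (2 * (ln K - ln eps))); lra).
  eapply Rle_lt_trans. apply Hu; lra.
  assert (exp (- x / 2) < exp (ln eps - ln K)). { apply exp_increasing. lra. }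
  unfold Rminus in H1. rewrite exp_plus, exp_Ropp, !exp_ln in H1 by (destruct eps; simpl; lra).
  apply Rmult_lt_compat_l with (r := K) in H1; auto.
  replace (K * (eps * / K)) with (pos eps) in H1 by (field; lra). auto.
Qed.

Lemma Gamma_eq s l : GI (gi s) l -> Gamma s = l.
Proof. intros H. unfold Gamma. apply (GI_unique (gi s)). auto. Qed.

Lemma Gamma_GI s : 0 < s -> GI (gi s) (Gamma s).
Proof.
  intros Hs. destruct (gi_GI s Hs) as [l Hl].
  unfold Gamma. replace (RInt_gen (fun x : R => exp (- x) * Rpower x (s - 1)) (at_right 0) (Rbar_locally p_infty)) with l; auto.
  symmetry. apply (GI_unique (gi s)). auto.
Qed.

Lemma Gamma_pos s : 0 < s -> 0 < Gamma s.
Proof.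
  intros Hs. apply Rlt_le_trans with (RInt (gi s) 1 2).
  - apply RInt_gt_0; try lra. intros; apply gi_pos. intros; apply gi_cont; lra.
  - apply GI_ge_proper; try lra. apply Gamma_GI; auto. intros; left; apply gi_pos.
Qed.

Lemma ev_pos2 : filter_prod (at_right 0) (Rbar_locally p_infty)
  (fun ab : R * R => forall x, Rmin (fst ab) (snd ab) <= x <= Rmax (fst ab) (snd ab) -> 0 < x).
Proof.
  generalize ev_pos. apply filter_imp. intros [a b] [H1 H2] x Hx. simpl in *.
  rewrite Rmin_left in Hx by lra. lra.
Qed.

Lemma GI_of_derive (u h : R -> R) la lb :
  (forall x, 0 < x -> is_derive u x (h x)) -> (forall x, 0 < x -> continuous h x) ->
  filterlim u (at_right 0) (locally la) -> filterlim u (Rbar_locally p_infty) (locally lb) ->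
  GI h (lb - la).
Proof.
  intros Hd Hc Ha Hb.
  assert (HD : forall x, 0 < x -> Derive u x = h x).
  { intros x Hx. apply is_derive_unique. apply Hd; auto. }
  assert (H := is_RInt_gen_Derive (Fa := at_right 0) (Fb := Rbar_locally p_infty) u la lb).
  apply (is_RInt_gen_ext (Derive u)).
  { generalize ev_pos2. apply filter_imp. intros ab Hab x Hx. apply HD. apply Hab. lra. }
  apply H; auto.
  - generalize ev_pos2. apply filter_imp. intros ab Hab x Hx. exists (h x). apply Hd. apply Hab; auto.
  - generalize ev_pos2. apply filter_imp. intros ab Hab x Hx.
    apply continuous_ext_loc with h.
    + assert (Hx0 : 0 < x) by (apply Hab; auto).
      exists (mkposreal x Hx0). intros y Hy. apply ball_inv in Hy. simpl in Hy.
      symmetry; apply HD. apply Rabs_lt_between in Hy. lra.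
    + apply Hc. apply Hab; auto.
Qed.

Lemma GI_plus f g l1 l2 : GI f l1 -> GI g l2 -> GI (fun x => f x + g x) (l1 + l2).
Proof. intros H1 H2. apply (is_RInt_gen_plus f g l1 l2 H1 H2). Qed.
Lemma GI_scal f c l : GI f l -> GI (fun x => c * f x) (c * l).
Proof. intros H1. apply (is_RInt_gen_scal f c l H1). Qed.
Lemma GI_ext f g l : (forall x, 0 < x -> f x = g x) -> GI f l -> GI g l.
Proof.
  intros He H. apply (is_RInt_gen_ext f g l); auto.
  generalize ev_pos2. apply filter_imp. intros ab Hab x Hx. apply He. apply Hab. lra.
Qed.

Lemma Gamma_succ s : 0 < s -> Gamma (s + 1) = s * Gamma s.
Proof.
  intros Hs.
  set (u := fun x => - (exp (- x) * Rpower x s)).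
  set (h := fun x => gi (s + 1) x - s * gi s x).
  assert (HG : GI h (0 - 0)).
  { apply GI_of_derive with u.
    - intros x Hx. unfold u, h, gi, Rpower. auto_derive. auto.
      replace (s + 1 - 1) with s by ring. rewrite exp_sub_ln; auto. field. lra.
    - intros x Hx. apply (ex_derive_continuous (K:=R_AbsRing) (V:=R_NormedModule)).
      unfold h, gi, Rpower. auto_derive. auto.
    - apply lim_right_pow with s; auto. intros x Hx. unfold u.
      rewrite Rabs_Ropp, Rabs_pos_eq.
      2: { left. apply Rmult_lt_0_compat; [apply exp_pos| unfold Rpower; apply exp_pos]. }
      rewrite <- (Rmult_1_l (Rpower x s)) at 2. apply Rmult_le_compat_r.
      left; unfold Rpower; apply exp_pos.
      apply Rle_trans with (exp 0); [apply exp_le_exp_compat; lra | rewrite exp_0; lra].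
    - destruct (gi_tail (s + 1)) as [K [HK0 HK]].
      apply lim_inf_exp with K; auto. intros x Hx. unfold u.
      rewrite Rabs_Ropp, Rabs_pos_eq.
      2: { left. apply Rmult_lt_0_compat; [apply exp_pos| unfold Rpower; apply exp_pos]. }
      specialize (HK x Hx). unfold gi in HK. replace (s + 1 - 1) with s in HK by ring. auto. }
  assert (H2 := GI_plus _ _ _ _ HG (GI_scal _ s _ (Gamma_GI s Hs))).
  assert (H3 : GI (gi (s + 1)) (0 - 0 + s * Gamma s)).
  { apply GI_ext with (2 := H2). intros x Hx. unfold h. ring. }
  rewrite (Gamma_eq _ _ H3). ring.
Qed.

Lemma Gamma_1 : Gamma 1 = 1.
Proof.
  set (u := fun x => - exp (- x)).
  assert (HG : GI (gi 1) (0 - u 0)).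
  { apply GI_of_derive with u.
    - intros x Hx. unfold u, gi. replace (1 - 1) with 0 by ring. rewrite Rpower_O; auto.
      auto_derive; auto. ring.
    - intros x Hx. apply gi_cont; auto.
    - apply (filterlim_filter_le_1 (F := locally 0)).
      + apply filter_le_within.
      + apply (ex_derive_continuous (K:=R_AbsRing) (V:=R_NormedModule)). unfold u; auto_derive; auto.
    - apply lim_inf_exp with 1; try lra. intros x Hx. unfold u.
      rewrite Rabs_Ropp, Rabs_pos_eq by (left; apply exp_pos). rewrite Rmult_1_l.
      apply exp_le_exp_compat. lra. }
  rewrite (Gamma_eq _ _ HG). unfold u. rewrite Ropp_0, exp_0. ring.
Qed.

Lemma exp_convex p q l : 0 <= l <= 1 -> exp (l * p + (1 - l) * q) <= l * exp p + (1 - l) * exp q.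
Proof.
  intros Hl. set (m := l * p + (1 - l) * q).
  assert (Hp : exp p = exp m * exp (p - m)) by (rewrite <- exp_plus; f_equal; ring).
  assert (Hq : exp q = exp m * exp (q - m)) by (rewrite <- exp_plus; f_equal; ring).
  assert (H1 := exp_ineq1_le (p - m)). assert (H2 := exp_ineq1_le (q - m)).
  assert (Hm := exp_pos m).
  rewrite Hp, Hq.
  assert (exp m * (1 + (p - m)) <= exp m * exp (p - m)) by (apply Rmult_le_compat_l; lra).
  assert (exp m * (1 + (q - m)) <= exp m * exp (q - m)) by (apply Rmult_le_compat_l; lra).
  assert (l * (exp m * (1 + (p - m))) + (1 - l) * (exp m * (1 + (q - m))) = exp m) by (unfold m; ring).
  nra.
Qed.

Lemma Gamma_logconv x y l : 0 < x -> 0 < y -> 0 <= l <= 1 ->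
  Gamma (l * x + (1 - l) * y) <= exp (l * ln (Gamma x) + (1 - l) * ln (Gamma y)).
Proof.
  intros Hx Hy Hl.
  set (A := Gamma x). set (B := Gamma y). set (E := exp (l * ln A + (1 - l) * ln B)).
  assert (HA : 0 < A) by (apply Gamma_pos; auto).
  assert (HB : 0 < B) by (apply Gamma_pos; auto).
  set (m := l * x + (1 - l) * y).
  assert (Hm : 0 < m). { unfold m. destruct (Req_dec l 0). subst; lra. nra. }
  assert (H1 : GI (fun t => E * (l / A * gi x t + (1 - l) / B * gi y t)) (E * (l / A * A + (1 - l) / B * B))).
  { apply GI_scal. apply GI_plus; apply GI_scal; apply Gamma_GI; auto. }
  replace (E * (l / A * A + (1 - l) / B * B)) with E in H1 by (field; lra).
  apply (GI_le (gi m) _ _ _ (Gamma_GI m Hm) H1).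
  intros t Ht.
  set (P := - t + (x - 1) * ln t - ln A). set (Q := - t + (y - 1) * ln t - ln B).
  assert (EP : exp P = gi x t / A).
  { unfold P, gi, Rpower. replace (- t + (x - 1) * ln t - ln A) with (- t + (x - 1) * ln t + - ln A) by ring.
    rewrite !exp_plus, (exp_Ropp (ln _)), exp_ln; auto. }
  assert (EQ : exp Q = gi y t / B).
  { unfold Q, gi, Rpower. replace (- t + (y - 1) * ln t - ln B) with (- t + (y - 1) * ln t + - ln B) by ring.
    rewrite !exp_plus, (exp_Ropp (ln _)), exp_ln; auto. }
  assert (Eg : gi m t = E * exp (l * P + (1 - l) * Q)).
  { unfold E, gi, Rpower. rewrite <- !exp_plus. f_equal. unfold P, Q, m. ring. }
  rewrite Eg. apply Rmult_le_compat_l. left; apply exp_pos.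
  eapply Rle_trans. apply exp_convex; auto. rewrite EP, EQ. right. field. lra.
Qed.

Definition LG (x : R) := ln (Gamma x).

Lemma LG_conv a b c : 0 < a -> a < b -> b < c -> LG b * (c - a) <= (c - b) * LG a + (b - a) * LG c.
Proof.
  intros Ha Hab Hbc.
  set (l := (c - b) / (c - a)).
  assert (Hl : 0 <= l <= 1).
  { unfold l. split. apply Rdiv_le_0_compat; lra.
    unfold Rdiv; apply Rle_trans with ((c - a) * / (c - a)); [apply Rmult_le_compat_r; [left; apply Rinv_0_lt_compat; lra | lra] | right; field; lra]. }
  assert (Hb : b = l * a + (1 - l) * c) by (unfold l; field; lra).
  assert (H := Gamma_logconv a c l Ha (ltac:(lra)) Hl).
  rewrite <- Hb in H.
  apply ln_le in H. 2: apply Gamma_pos; lra.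
  rewrite ln_exp in H. unfold LG.
  assert (ln (Gamma b) * (c - a) <= (l * ln (Gamma a) + (1 - l) * ln (Gamma c)) * (c - a)).
  { apply Rmult_le_compat_r; lra. }
  replace ((l * ln (Gamma a) + (1 - l) * ln (Gamma c)) * (c - a)) with
     ((c - b) * ln (Gamma a) + (b - a) * ln (Gamma c)) in H0 by (unfold l; field; lra).
  auto.
Qed.

Lemma LG_succ s : 0 < s -> LG (s + 1) = ln s + LG s.
Proof. intros Hs. unfold LG. rewrite Gamma_succ; auto. apply ln_mult; auto. apply Gamma_pos; auto. Qed.


Definition gsub (k x : R) := Rpower x k / k.

Lemma gsub_pos (k : R) (hk : 1 <= k) x : 0 < x -> 0 < gsub k x.
Proof. intros. unfold gsub, Rpower. apply Rdiv_lt_0_compat; [apply exp_pos|lra]. Qed.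

Lemma gsub_der (k : R) (hk : 1 <= k) x : 0 < x -> is_derive (gsub k) x (Rpower x (k - 1)).
Proof. intros Hx. unfold gsub, Rpower. auto_derive. auto. rewrite exp_sub_ln; auto. field. lra. Qed.

Lemma gsub_right (k : R) (hk : 1 <= k) : filterlim (gsub k) (at_right 0) (at_right 0).
Proof.
  intros P [eps Heps].
  assert (Hd : 0 < Rmin 1 (Rpower (eps * k) (1 / k))).
  { apply Rmin_glb_lt; [lra| unfold Rpower; apply exp_pos]. }
  exists (mkposreal _ Hd). intros y Hy Hy0. simpl in Hy.
  apply ball_inv in Hy. rewrite Rminus_0_r, Rabs_pos_eq in Hy by lra.
  apply Heps; [|apply (gsub_pos k hk); auto].
  apply ball0. rewrite Rabs_pos_eq by (left; apply (gsub_pos k hk); auto).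
  assert (y < Rpower (eps * k) (1/k)) by (generalize (Rmin_r 1 (Rpower (eps * k) (1/k))); lra).
  assert (Hek : 0 < eps * k) by (destruct eps; simpl; nra).
  assert (Rpower y k < eps * k).
  { replace (eps * k) with (Rpower (Rpower (eps * k) (1 / k)) k).
    apply Rlt_Rpower_l; auto; lra.
    rewrite Rpower_mult. replace (1 / k * k) with 1 by (field; lra). apply Rpower_1; auto. }
  unfold gsub. apply Rmult_lt_reg_r with k; try lra. unfold Rdiv. rewrite Rmult_assoc, Rinv_l; lra.
Qed.

Lemma gsub_inf (k : R) (hk : 1 <= k) : filterlim (gsub k) (Rbar_locally p_infty) (Rbar_locally p_infty).
Proof.
  intros P [M HM]. exists (Rmax 1 (k * M)). intros x Hx. apply HM.
  assert (1 < x) by (generalize (Rmax_l 1 (k * M)); lra).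
  assert (k * M < x) by (generalize (Rmax_r 1 (k * M)); lra).
  assert (x <= Rpower x k). { rewrite <- (Rpower_1 x) at 1 by lra. apply Rle_Rpower; lra. }
  unfold gsub. apply Rmult_lt_reg_r with k; try lra. unfold Rdiv. rewrite Rmult_assoc, Rinv_l; lra.
Qed.

Definition gk (k y x : R) := exp (- (Rpower x k / k)) * Rpower x (y - 1).

Lemma gk_id (k : R) (hk : 1 <= k) y x : 0 < x ->
  gk k y x = Rpower k (y / k - 1) * (Rpower x (k - 1) * gi (y / k) (gsub k x)).
Proof.
  intros Hx. unfold gk, gi, gsub.
  assert (Hl : ln (Rpower x k / k) = k * ln x - ln k).
  { unfold Rdiv. rewrite ln_mult, ln_Rpower, ln_Rinv; try lra.
    unfold Rpower; apply exp_pos. apply Rinv_0_lt_compat; lra. }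
  replace (Rpower (Rpower x k / k) (y / k - 1)) with (exp ((y / k - 1) * (k * ln x - ln k))).
  2: { rewrite <- Hl. reflexivity. }
  set (W := exp (- (Rpower x k / k))).
  unfold Rpower.
  assert (E : exp ((y / k - 1) * ln k) * exp ((k - 1) * ln x) * exp ((y / k - 1) * (k * ln x - ln k)) = exp ((y - 1) * ln x)).
  { rewrite <- !exp_plus. f_equal. field. lra. }
  rewrite <- E. ring.
Qed.

Lemma gk_RInt (k : R) (hk : 1 <= k) y a b : 0 < a -> a <= b ->
  RInt (gk k y) a b = Rpower k (y / k - 1) * RInt (gi (y / k)) (gsub k a) (gsub k b).
Proof.
  intros Ha Hab.
  assert (H := is_RInt_comp (V:=R_CompleteNormedModule) (gi (y / k)) (gsub k) (fun x => Rpower x (k - 1)) a b).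
  assert (H1 : is_RInt (fun x => scal (Rpower x (k - 1)) (gi (y / k) (gsub k x))) a b
     (RInt (gi (y / k)) (gsub k a) (gsub k b))).
  { apply H.
    - intros x Hx. rewrite Rmin_left in Hx by lra. apply gi_cont. apply (gsub_pos k hk). lra.
    - intros x Hx. rewrite Rmin_left in Hx by lra. split. apply (gsub_der k hk); lra.
      apply cont_pow; lra. }
  apply (is_RInt_scal _ _ _ (Rpower k (y / k - 1))) in H1.
  apply is_RInt_unique. eapply is_RInt_ext; [| exact H1].
  intros x Hx. rewrite Rmin_left in Hx by lra. rewrite (gk_id k hk) by lra. reflexivity.
Qed.

Lemma gk_GI (k : R) (hk : 1 <= k) y : 0 < y -> GI (gk k y) (Rpower k (y / k - 1) * Gamma (y / k)).
Proof.
  intros Hy. assert (Hyk : 0 < y / k) by (apply Rdiv_lt_0_compat; lra).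
  apply GI_of_lim.
  - intros a b Ha Hab. apply exR_pos; auto. intros x Hx.
    apply (ex_derive_continuous (K:=R_AbsRing) (V:=R_NormedModule)).
    unfold gk, Rpower. auto_derive. repeat split; auto; lra.
  - assert (Hc : filterlim (fun ab : R * R => RInt (gi (y / k)) (gsub k (fst ab)) (gsub k (snd ab)))
       (filter_prod (at_right 0) (Rbar_locally p_infty)) (locally (Gamma (y / k)))).
    { apply (filterlim_comp _ _ _ (fun ab : R * R => (gsub k (fst ab), gsub k (snd ab)))
         (fun ab : R * R => RInt (gi (y / k)) (fst ab) (snd ab)) _ (filter_prod (at_right 0) (Rbar_locally p_infty))).
      - apply filterlim_pair.
        + apply (filterlim_comp _ _ _ fst (gsub k) _ (at_right 0)). apply filterlim_fst. apply (gsub_right k hk).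
        + apply (filterlim_comp _ _ _ snd (gsub k) _ (Rbar_locally p_infty)). apply filterlim_snd. apply (gsub_inf k hk).
      - apply lim_of_GI. apply Gamma_GI; auto. }
    assert (Hc2 : filterlim (fun ab : R * R => Rpower k (y / k - 1) * RInt (gi (y / k)) (gsub k (fst ab)) (gsub k (snd ab)))
       (filter_prod (at_right 0) (Rbar_locally p_infty)) (locally (Rpower k (y / k - 1) * Gamma (y / k)))).
    { apply (filterlim_comp _ _ _ _ (fun z => Rpower k (y / k - 1) * z) _ (locally (Gamma (y / k)))); auto.
      apply (ex_derive_continuous (K:=R_AbsRing) (V:=R_NormedModule) (fun z => Rpower k (y / k - 1) * z)).
      auto_derive; auto. }
    apply (filterlim_ext_loc _ _ (F := filter_prod (at_right 0) (Rbar_locally p_infty))) with (2 := Hc2).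
    generalize ev_pos. apply filter_imp. intros [a b] [H1 H2]. simpl in *.
    symmetry. apply (gk_RInt k hk); lra.
Qed.

Lemma Gammak_eq (k : R) (hk : 1 <= k) y : 0 < y -> Gamma_k k y = Rpower k (y / k - 1) * Gamma (y / k).
Proof. intros Hy. unfold Gamma_k. apply (GI_unique (gk k y)). apply (gk_GI k hk); auto. Qed.


Definition useq (n : nat) := sum_f_R0 (fun j => / INR (S j)) n - ln (INR (S n)).

Lemma INR_S_pos n : 0 < INR (S n).
Proof. apply lt_0_INR. lia. Qed.

Lemma ln_div_le x y : 0 < x -> 0 < y -> ln x - ln y <= x / y - 1.
Proof.
  intros Hx Hy. assert (H := ln_le_lin (x / y) (Rdiv_lt_0_compat _ _ Hx Hy)).
  unfold Rdiv in H. rewrite ln_mult, ln_Rinv in H; auto. apply Rinv_0_lt_compat; auto.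
Qed.

Lemma useq_decr n : useq (S n) <= useq n.
Proof.
  unfold useq. rewrite tech5. cbv beta.
  assert (H := ln_div_le (INR (S n)) (INR (S (S n))) (INR_S_pos n) (INR_S_pos (S n))).
  rewrite (S_INR (S n)) in *.
  assert (0 < INR (S n)) by apply INR_S_pos.
  replace (INR (S n) / (INR (S n) + 1) - 1) with (- / (INR (S n) + 1)) in H by (field; lra).
  lra.
Qed.

Lemma H_ge_ln n : ln (INR (S (S n))) <= sum_f_R0 (fun j => / INR (S j)) n.
Proof.
  induction n.
  - simpl. assert (H := ln_le_lin 2 ltac:(lra)). replace (1 + 1) with 2 by ring. lra.
  - rewrite tech5. cbv beta.
    assert (H := ln_div_le (INR (S (S (S n)))) (INR (S (S n))) (INR_S_pos _) (INR_S_pos _)).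
    rewrite (S_INR (S (S n))) in *.
    assert (0 < INR (S (S n))) by apply INR_S_pos.
    replace ((INR (S (S n)) + 1) / INR (S (S n)) - 1) with (/ INR (S (S n))) in H by (field; lra).
    lra.
Qed.

Lemma useq_pos n : 0 <= useq n.
Proof.
  unfold useq. assert (H := H_ge_ln n).
  assert (ln (INR (S n)) <= ln (INR (S (S n)))).
  { apply ln_le. apply INR_S_pos. apply le_INR. lia. }
  lra.
Qed.

Lemma useq_lim : is_lim_seq useq euler_gamma.
Proof.
  assert (Hex := ex_lim_seq_decr useq useq_decr).
  assert (Hc := Lim_seq_correct useq Hex).
  assert (H1 : Rbar_le (Lim_seq (fun _ => 0)) (Lim_seq useq)).
  { apply Lim_seq_le_loc. exists O. intros; apply useq_pos. }
  assert (H2 : Rbar_le (Lim_seq useq) (Lim_seq (fun _ => useq O))).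
  { apply Lim_seq_le_loc. exists O. intros n _. induction n. lra.
    apply Rle_trans with (useq n); auto. apply useq_decr. }
  rewrite Lim_seq_const in H1, H2.
  unfold euler_gamma. fold useq.
  destruct (Lim_seq useq) eqn:E; simpl in *; try contradiction. auto.
Qed.

Lemma LG_shift y m : 0 < y ->
  LG (y + INR (S (S m))) = LG y + ln y + sum_f_R0 (fun j => ln (y + INR (S j))) m.
Proof.
  intros Hy. induction m.
  - simpl sum_f_R0. replace (y + INR 2) with ((y + 1) + 1) by (simpl; ring).
    rewrite LG_succ by lra. rewrite LG_succ by lra. replace (INR 1) with 1 by reflexivity. ring.
  - rewrite tech5. cbv beta.
    replace (y + INR (S (S (S m)))) with ((y + INR (S (S m))) + 1) by (rewrite (S_INR (S (S m))); ring).
    rewrite LG_succ. rewrite IHm. ring.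
    assert (0 <= INR (S (S m))) by apply pos_INR. lra.
Qed.

Lemma BM y m : 0 < y ->
  0 <= LG (y + (INR (S m) + 1)) - LG (INR (S m) + 1) - y * ln (INR (S m)) <= y * ((1 + y) / INR (S m)).
Proof.
  intros Hy. set (N := INR (S m)). assert (HN : 0 < N) by apply INR_S_pos.
  assert (HN1 : 1 <= N). { unfold N. rewrite S_INR. assert (0 <= INR m) by apply pos_INR. lra. }
  assert (Hs : LG (N + 1) = ln N + LG N) by (apply LG_succ; lra).
  split.
  - assert (H := LG_conv N (N + 1) (N + 1 + y) HN ltac:(lra) ltac:(lra)).
    replace (N + 1 + y) with (y + (N + 1)) in H by ring.
    replace (y + (N + 1) - N) with (1 + y) in H by ring.
    replace (y + (N + 1) - (N + 1)) with y in H by ring.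
    replace (N + 1 - N) with 1 in H by ring. nra.
  - assert (H := LG_conv (N + 1) (y + (N + 1)) (y + (N + 1) + 1) ltac:(lra) ltac:(lra) ltac:(lra)).
    rewrite (LG_succ (y + (N + 1))) in H by lra.
    replace (y + (N + 1) + 1 - (N + 1)) with (1 + y) in H by ring.
    replace (y + (N + 1) + 1 - (y + (N + 1))) with 1 in H by ring.
    replace (y + (N + 1) - (N + 1)) with y in H by ring.
    assert (Hl := ln_div_le (y + (N + 1)) N ltac:(lra) HN).
    replace ((y + (N + 1)) / N - 1) with ((1 + y) / N) in Hl by (field; lra).
    assert (y * (ln (y + (N + 1)) - ln N) <= y * ((1 + y) / N)) by (apply Rmult_le_compat_l; lra).
    nra.
Qed.

Definition Wm (m : nat) (y : R) := sum_f_R0 (fun j => y / INR (S j) - ln (y + INR (S j))) m.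

Lemma Wm_eq m y : Wm m y = y * sum_f_R0 (fun j => / INR (S j)) m - sum_f_R0 (fun j => ln (y + INR (S j))) m.
Proof.
  unfold Wm. induction m.
  - simpl. unfold Rdiv. ring.
  - rewrite !tech5. rewrite IHm. unfold Rdiv. ring.
Qed.

Definition Fm (y : R) := LG y + ln y + euler_gamma * y.

Lemma Fm_dec y m : 0 < y ->
  Fm y = LG (INR (S m) + 1) + Wm m y + y * (euler_gamma - useq m)
         + (LG (y + (INR (S m) + 1)) - LG (INR (S m) + 1) - y * ln (INR (S m))).
Proof.
  intros Hy. unfold Fm.
  assert (H := LG_shift y m Hy).
  replace (INR (S (S m))) with (INR (S m) + 1) in H by (rewrite (S_INR (S m)); ring).
  rewrite Wm_eq. unfold useq. lra.
Qed.

Definition rho a b k c y := a * (y / c - ln (y + c)) - b * (y / k / c - ln (y / k + c)).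

Lemma rho_der_pos a b k c x : 1 <= k -> 0 < b <= a -> 0 < c -> 0 < x ->
  0 <= a * (1 / c - 1 / (x + c)) - b * (1 / k) * (1 / c - 1 / (x / k + c)).
Proof.
  intros Hk Hb Hc Hx.
  assert (EP : 1 / c - 1 / (x + c) = x / (c * (x + c))) by (field; lra).
  assert (EQ : (1 / k) * (1 / c - 1 / (x / k + c)) = x / (c * (k * x + k * k * c))).
  { assert (0 < x / k) by (apply Rdiv_lt_0_compat; lra).
    assert (0 < k * x + k * k * c) by nra.
    field. repeat split; try lra. nra. }
  assert (HP : 0 <= x / (c * (x + c))) by (apply Rdiv_le_0_compat; nra).
  assert (HQ : x / (c * (k * x + k * k * c)) <= x / (c * (x + c))).
  { unfold Rdiv. apply Rmult_le_compat_l; [lra|]. apply Rinv_le_contravar. nra.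
    assert (1 <= k * k) by nra. assert (c <= k * k * c) by nra. assert (x <= k * x) by nra. apply Rmult_le_compat_l; lra. }
  rewrite Rmult_assoc, EQ, EP.
  assert (b * (x / (c * (k * x + k * k * c))) <= b * (x / (c * (x + c)))) by (apply Rmult_le_compat_l; lra).
  assert (b * (x / (c * (x + c))) <= a * (x / (c * (x + c)))) by (apply Rmult_le_compat_r; lra).
  lra.
Qed.

Lemma rho_mono a b k c y1 y2 : 1 <= k -> 0 < b <= a -> 0 < c -> 0 < y1 <= y2 ->
  rho a b k c y1 <= rho a b k c y2.
Proof.
  intros Hk Hb Hc [Hy1 Hy12].
  destruct (Req_dec y1 y2) as [->|Hne]; [lra|].
  assert (Hlt : y1 < y2) by lra.
  assert (Heps : forall eps, 0 < eps -> rho a b k c y1 + eps * y1 < rho a b k c y2 + eps * y2).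
  { intros eps He.
    apply (incr_function (fun y => rho a b k c y + eps * y) (Finite 0) p_infty
      (fun x => a * (1 / c - 1 / (x + c)) - b * (1 / k) * (1 / c - 1 / (x / k + c)) + eps)); simpl; auto.
    - intros x Hx _. unfold rho. auto_derive.
      + repeat split; try lra. apply Rplus_lt_0_compat; auto. apply Rdiv_lt_0_compat; lra.
      + assert (0 < x / k) by (apply Rdiv_lt_0_compat; lra).
        field. repeat split; try lra. nra.
    - intros x Hx _. assert (H := rho_der_pos a b k c x Hk Hb Hc Hx). lra. }
  apply Rnot_lt_le. intros Hc2.
  set (eps := (rho a b k c y1 - rho a b k c y2) / (2 * (y2 - y1))).
  assert (He : 0 < eps) by (unfold eps; apply Rdiv_lt_0_compat; lra).
  specialize (Heps eps He).
  assert (eps * (y2 - y1) = (rho a b k c y1 - rho a b k c y2) / 2) by (unfold eps; field; lra).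
  nra.
Qed.

Lemma Wm_rho a b k m y : 0 < k ->
  a * Wm m y - b * Wm m (y / k) = sum_f_R0 (fun j => rho a b k (INR (S j)) y) m.
Proof.
  intros Hk. unfold Wm, rho. induction m.
  - simpl. ring.
  - rewrite !tech5. rewrite <- IHm. ring.
Qed.

Lemma Wm_mono a b k m y1 y2 : 1 <= k -> 0 < b <= a -> 0 < y1 <= y2 ->
  a * Wm m y1 - b * Wm m (y1 / k) <= a * Wm m y2 - b * Wm m (y2 / k).
Proof.
  intros Hk Hb Hy. rewrite !Wm_rho by lra.
  induction m.
  - simpl. apply rho_mono; auto; lra.
  - rewrite !tech5. apply Rplus_le_compat; auto. apply rho_mono; auto. apply INR_S_pos.
Qed.

Definition Gm a b k y := a * Fm y - b * Fm (y / k).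

Lemma Gm_mono a b k y1 y2 : 1 <= k -> 0 < b <= a -> 0 < y1 <= y2 -> Gm a b k y1 <= Gm a b k y2.
Proof.
  intros Hk Hb Hy.
  assert (Hk0 : 0 < k) by lra.
  assert (Hy1k : 0 < y1 / k) by (apply Rdiv_lt_0_compat; lra).
  assert (Hy2k : 0 < y2 / k) by (apply Rdiv_lt_0_compat; lra).
  assert (Hyk : y1 / k <= y2 / k) by (unfold Rdiv; apply Rmult_le_compat_r; [left; apply Rinv_0_lt_compat|]; lra).
  set (C1 := a * (y2 - y1) + b * (y2 / k - y1 / k)).
  set (C2 := a * (y1 * (1 + y1)) + b * (y2 / k * (1 + y2 / k))).
  assert (HC1 : 0 <= C1) by (unfold C1; apply Rplus_le_le_0_compat; apply Rmult_le_pos; lra).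
  assert (HC2 : 0 <= C2) by (unfold C2; apply Rplus_le_le_0_compat; apply Rmult_le_pos; try lra; apply Rmult_le_pos; lra).
  apply le_epsilon. intros eps Heps.
  assert (Hd1 : 0 < eps / (2 * (C1 + 1))) by (apply Rdiv_lt_0_compat; lra).
  assert (Hd2 : 0 < eps / (2 * (C2 + 1))) by (apply Rdiv_lt_0_compat; lra).
  destruct (proj2 (is_lim_seq_spec useq euler_gamma) useq_lim (mkposreal _ Hd1)) as [N1 HN1].
  destruct (archimed_cor1 _ Hd2) as [N2 [HN2 HN2']].
  set (m := max N1 N2).
  specialize (HN1 m (Nat.le_max_l _ _)). simpl in HN1.
  assert (Hm : / INR (S m) <= / INR N2).
  { apply Rinv_le_contravar. apply lt_0_INR; auto. apply le_INR. unfold m. lia. }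
  set (N := INR (S m)). assert (HN : 0 < N) by apply INR_S_pos.
  set (d := euler_gamma - useq m).
  assert (Hd : Rabs d < eps / (2 * (C1 + 1))) by (unfold d; rewrite Rabs_minus_sym; auto).
  unfold Gm. rewrite !(Fm_dec _ m) by lra. fold N.
  set (e := fun y => LG (y + (N + 1)) - LG (N + 1) - y * ln N).
  assert (B1 := BM y1 m ltac:(lra)). assert (B2 := BM y2 m ltac:(lra)).
  assert (B3 := BM (y1 / k) m Hy1k). assert (B4 := BM (y2 / k) m Hy2k).
  fold N in B1, B2, B3, B4. fold (e y1) in B1. fold (e y2) in B2. fold (e (y1 / k)) in B3. fold (e (y2 / k)) in B4.
  fold (e y1). fold (e y2). fold (e (y1 / k)). fold (e (y2 / k)).
  fold d.
  assert (HW := Wm_mono a b k m y1 y2 Hk Hb Hy).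
  assert (HL : - (Rabs d * C1) <= d * (a * y2 - b * (y2 / k) - a * y1 + b * (y1 / k))).
  { replace (a * y2 - b * (y2 / k) - a * y1 + b * (y1 / k)) with (a * (y2 - y1) - b * (y2 / k - y1 / k)) by ring.
    assert (Rabs (d * (a * (y2 - y1) - b * (y2 / k - y1 / k))) <= Rabs d * C1).
    { rewrite Rabs_mult. apply Rmult_le_compat_l. apply Rabs_pos. unfold C1.
      apply Rabs_le. split; nra. }
    generalize (proj1 (Rabs_le_between _ _) H). intros; lra. }
  assert (HL2 : Rabs d * C1 <= eps / 2).
  { apply Rle_trans with (eps / (2 * (C1 + 1)) * C1). apply Rmult_le_compat_r; lra.
    apply Rle_trans with (eps / (2 * (C1 + 1)) * (C1 + 1)). apply Rmult_le_compat_l; lra.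
    right; field; lra. }
  assert (HE1 : a * e y1 <= a * (y1 * ((1 + y1) / N))) by (apply Rmult_le_compat_l; lra).
  assert (HE2 : b * e (y2 / k) <= b * (y2 / k * ((1 + y2 / k) / N))) by (apply Rmult_le_compat_l; lra).
  assert (HE3 : 0 <= a * e y2) by (apply Rmult_le_pos; lra).
  assert (HE4 : 0 <= b * e (y1 / k)) by (apply Rmult_le_pos; lra).
  assert (HE5 : a * (y1 * ((1 + y1) / N)) + b * (y2 / k * ((1 + y2 / k) / N)) = C2 * / N)
    by (unfold C2; field; lra).
  assert (HE6 : C2 * / N <= eps / 2).
  { apply Rle_trans with (C2 * / INR N2). apply Rmult_le_compat_l; auto.
    apply Rle_trans with (C2 * (eps / (2 * (C2 + 1)))). apply Rmult_le_compat_l; lra.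
    apply Rle_trans with ((C2 + 1) * (eps / (2 * (C2 + 1)))). apply Rmult_le_compat_r; lra.
    right; field; lra. }
  lra.
Qed.

Lemma exp5 A B C D E : exp A * exp B * exp C / (exp D * exp E) = exp (A + B + C - (D + E)).
Proof.
  replace (A + B + C - (D + E)) with (A + B + C + - (D + E)) by ring.
  rewrite !exp_plus, exp_Ropp, exp_plus. field. split; apply Rgt_not_eq, exp_pos.
Qed.
Lemma exp6 A B C D E F : exp A * exp B * exp C / (exp D * exp E * exp F) = exp (A + B + C - (D + E + F)).
Proof.
  replace (A + B + C - (D + E + F)) with (A + B + C + - (D + E + F)) by ring.
  rewrite !exp_plus, exp_Ropp, !exp_plus. field. repeat split; apply Rgt_not_eq, exp_pos.
Qed.
Lemma exp2 A B : exp A / exp B = exp (A - B).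
Proof. unfold Rminus. rewrite exp_plus, exp_Ropp. reflexivity. Qed.

Definition Phi k a b alpha beta t :=
  (a - b) * ln (alpha + beta * t) + t * ((k * a * beta * euler_gamma - b * beta * euler_gamma) / k)
  + a * ln (Gamma (alpha + beta * t))
  - (- (b * beta * t / k) * ln k + b * ln (Gamma_k k (alpha + beta * t))).

Lemma theta_Phi k a b alpha beta t : theta k a b alpha beta t = exp (Phi k a b alpha beta t).
Proof. unfold theta, Phi, Rpower. rewrite exp5. reflexivity. Qed.

Lemma Phi_Gm k a b alpha beta t : 1 <= k -> 0 < alpha + beta * t ->
  Phi k a b alpha beta t = Gm a b k (alpha + beta * t)
     + (- a * euler_gamma * alpha + b * euler_gamma * alpha / k - b * alpha * ln k / k).
Proof.
  intros Hk Hx.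
  assert (Hxk : 0 < (alpha + beta * t) / k) by (apply Rdiv_lt_0_compat; lra).
  set (x := alpha + beta * t) in *.
  unfold Phi, Gm, Fm. fold x.
  rewrite (Gammak_eq k Hk x Hx).
  rewrite ln_mult. 2: unfold Rpower; apply exp_pos. 2: apply Gamma_pos; auto.
  rewrite ln_Rpower. unfold LG.
  replace (ln (x / k)) with (ln x - ln k).
  2: { unfold Rdiv. rewrite ln_mult, ln_Rinv; try lra. apply Rinv_0_lt_compat; lra. }
  unfold x. field. lra.
Qed.

Theorem theorem3p9 (k a b alpha beta : R)
  (hk : 1 <= k) (ha : 0 < a) (hb : 0 < b) (halpha : 0 < alpha) (hbeta : 0 < beta)
  (hab : b <= a) :
  (forall s t : R, 0 < s -> s <= t -> theta k a b alpha beta s <= theta k a b alpha beta t)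
  /\
  (forall t : R, 0 < t < 1 ->
     let c := (k * a * beta * euler_gamma - b * beta * euler_gamma) / k in
     Rpower alpha (a - b) * exp (- t * c) * Rpower (Gamma alpha) a
       / (Rpower (alpha + beta * t) (a - b) * Rpower k (b * beta * t / k)
          * Rpower (Gamma_k k alpha) b)
     <= Rpower (Gamma (alpha + beta * t)) a / Rpower (Gamma_k k (alpha + beta * t)) b
     /\
     Rpower (Gamma (alpha + beta * t)) a / Rpower (Gamma_k k (alpha + beta * t)) b
     <= Rpower (alpha + beta) (a - b) * exp ((1 - t) * c) * Rpower (Gamma (alpha + beta)) a
       / (Rpower (alpha + beta * t) (a - b) * Rpower k (b * beta / k * (t - 1))
          * Rpower (Gamma_k k (alpha + beta)) b)).
Proof.
  assert (Hmono : forall s t, 0 <= s -> s <= t -> Phi k a b alpha beta s <= Phi k a b alpha beta t).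
  { intros s t Hs Hst.
    rewrite !Phi_Gm; auto; try nra.
    apply Rplus_le_compat_r. apply Gm_mono; auto; nra. }
  split.
  - intros s t Hs Hst. rewrite !theta_Phi. apply exp_le_exp_compat. apply Hmono; lra.
  - intros t Ht. cbv zeta.
    set (Z := (a - b) * ln (alpha + beta * t) + t * ((k * a * beta * euler_gamma - b * beta * euler_gamma) / k)
              + b * beta * t / k * ln k).
    assert (H0 := Hmono 0 t ltac:(lra) ltac:(lra)).
    assert (H1 := Hmono t 1 ltac:(lra) ltac:(lra)).
    unfold Phi in H0, H1.
    rewrite Rmult_0_r, Rplus_0_r in H0. rewrite Rmult_1_r in H1.
    split.
    + unfold Rpower. rewrite exp6, exp2. apply exp_le_exp_compat.
      unfold Z in *. nra.
    + unfold Rpower. rewrite exp6, exp2. apply exp_le_exp_compat.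
      unfold Z in *. nra.
Qed.
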